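(* Let $k$ be an algebraically closed field of characteristic $2$, $f = x^2+y^2z+yz^2$, $m \geq 5$, $R_m = k[x_0,\dots,x_m,y_0,\dots,y_m,z_0,\dots,z_m]$, and $(\mathbb{A}^3)_m = \mathrm{Spec}\, R_m$. Define $f^{(j)}\in R_m$ ($0\le j\le m$) by $f(\sum_{i=0}^m x_it^i,\sum_{i=0}^m y_it^i,\sum_{i=0}^m z_it^i) = \sum_{j=0}^m f^{(j)}t^j$ in $R_m[t]/\langle t^{m+1}\rangle$. Define the ideals $I_m^0 = \langle x_0,x_1,x_2,y_0,y_1,z_0,z_1\rangle + \langle f^{(0)},\dots,f^{(m)}\rangle$, $I_m^1 = J_m^1 (R_m)_{z_1}\cap R_m$, $I_m^2 = J_m^2 (R_m)_{y_1}\cap R_m$, $I_m^3 = J_m^3 (R_m)_{y_1}\cap R_m$, where $J_m^1 = \langle x_0,x_1,y_0,y_1,z_0\rangle + \langle f^{(0)},\dots,f^{(m)}\rangle$, $J_m^2 = \langle x_0,x_1,y_0,z_0,z_1\rangle + \langle f^{(0)},\dots,f^{(m)}\rangle$, $J_m^3 = \langle x_0,x_1,y_0,z_0,y_1+z_1\rangle + \langle f^{(0)},\dots,f^{(m)}\rangle$, and let $Z_m^i = \mathbf{V}(I_m^i)\subseteq (\mathbb{A}^3)_m$ for $i=0,1,2,3$. Let $\psi_1,\psi_2$ be the automorphisms of $(\mathbb{A}^3)_m$ corresponding to the $k$-algebra automorphisms $\varphi_1,\varphi_2$ of $R_m$ given by $\varphi_1: x_i\mapsto x_i,\ y_i\mapsto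 z_i,\ z_i\mapsto y_i$ and $\varphi_2: x_i\mapsto x_i,\ y_i\mapsto y_i,\ z_i\mapsto y_i+z_i$ (for all $i$). Then (1) $\psi_1(Z_m^0)=Z_m^0$, $\psi_1(Z_m^1)=Z_m^2$, $\psi_1(Z_m^2)=Z_m^1$, $\psi_1(Z_m^3)=Z_m^3$; (2) $\psi_2(Z_m^0)=Z_m^0$, $\psi_2(Z_m^1)=Z_m^1$, $\psi_2(Z_m^2)=Z_m^3$, $\psi_2(Z_m^3)=Z_m^2$.
   Context: $(R_m)_h$ is the localization of $R_m$ at powers of $h$, and $J\cdot(R_m)_h\cap R_m$ denotes the preimage in $R_m$ of the extended ideal. $\mathbf{V}(I)$ is the zero set of the ideal $I$ in $(\mathbb{A}^3)_m$. *)

(* Defs.v *)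
From HB Require Import structures.
From mathcomp Require Import all_boot all_order all_algebra.
From mathcomp Require Import mpoly.
Set Implicit Arguments. Unset Strict Implicit. Unset Printing Implicit Defensive.
Import Order.TTheory GRing.Theory.
Local Open Scope ring_scope.

(* R_m = k[x_0..x_m, y_0..y_m, z_0..z_m] is {mpoly k[(3*m).+3]};
   variable index i <-> x_i, m.+1 + i <-> y_i, 2*m.+1 + i <-> z_i. *)
Notation Rm k m := {mpoly k[(3 * m).+3]}.

Section Jets.
Variables (k : comNzRingType) (m : nat).

Definition xv (i : nat) : Rm k m := 'X_(inord i).
Definition yv (i : nat) : Rm k m := 'X_(inord (m.+1 + i)).
Definition zv (i : nat) : Rm k m := 'X_(inord (2 * m.+1 + i)).

Definition Xt : {poly Rm k m} := \sum_(i < m.+1) xv i *: 'X^i.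
Definition Yt : {poly Rm k m} := \sum_(i < m.+1) yv i *: 'X^i.
Definition Zt : {poly Rm k m} := \sum_(i < m.+1) zv i *: 'X^i.

Definition fT : {poly Rm k m} := Xt ^+ 2 + Yt ^+ 2 * Zt + Yt * Zt ^+ 2.

(* f^{(j)} : coefficient of t^j (j <= m; unaffected by truncation mod t^{m+1}) *)
Definition fj (j : nat) : Rm k m := fT`_j.

Definition fgens (g : Rm k m) : Prop := exists2 j : nat, (j <= m)%N & g = fj j.

Definition phi1_var (a : 'I_((3 * m).+3)) : Rm k m :=
  let b := (a %/ m.+1)%N in let i := (a %% m.+1)%N in
  if b == 0%N then xv i else if b == 1%N then zv i else yv i.
Definition phi2_var (a : 'I_((3 * m).+3)) : Rm k m :=
  let b := (a %/ m.+1)%N in let i := (a %% m.+1)%N in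
  if b == 0%N then xv i else if b == 1%N then yv i else yv i + zv i.

Definition phi1 (p : Rm k m) : Rm k m := comp_mpoly (mktuple phi1_var) p.
Definition phi2 (p : Rm k m) : Rm k m := comp_mpoly (mktuple phi2_var) p.

End Jets.

Section Ideals.
Variable R : comNzRingType.

Definition gen_ideal (S : R -> Prop) : R -> Prop :=
  fun g => exists n (a c : 'I_n -> R),
    (forall i, S (a i)) /\ g = \sum_(i < n) c i * a i.

(* J (R)_h \cap R, i.e. {g | g/1 \in J R_h} = {g | exists n, h^n g \in J} *)
Definition contr_loc (J : R -> Prop) (h : R) : R -> Prop :=
  fun g => exists n : nat, J (h ^+ n * g).

Definition prime_ideal (P : R -> Prop) : Prop :=
  [/\ P 0, (forall a b, P a -> P b -> P (a + b)),
      (forall r a, P a -> P (r * a)), ~ P 1 &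
      (forall a b, P (a * b) -> P a \/ P b)].

(* points of Spec R are prime ideals; V(I) is the set of primes containing I *)
Definition zero_set (I : R -> Prop) : (R -> Prop) -> Prop :=
  fun P => prime_ideal P /\ (forall g, I g -> P g).

(* image of a set of points of Spec R under Spec(phi), P |-> phi^{-1}(P) *)
Definition spec_image (phi : R -> R) (Z : (R -> Prop) -> Prop)
  : (R -> Prop) -> Prop :=
  fun Q => exists2 P, Z P & Q = (fun g => P (phi g)).

End Ideals.

Section TheIdeals.
Variables (k : comNzRingType) (m : nat).
Local Notation x := (@xv k m). Local Notation y := (@yv k m).
Local Notation z := (@zv k m).

Definition I0 : Rm k m -> Prop := gen_ideal (fun g =>
  g = x 0 \/ g = x 1 \/ g = x 2 \/ g = y 0 \/ g = y 1 \/ g = z 0 \/ g = z 1 \/ fgens g).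
Definition J1 : Rm k m -> Prop := gen_ideal (fun g =>
  g = x 0 \/ g = x 1 \/ g = y 0 \/ g = y 1 \/ g = z 0 \/ fgens g).
Definition J2 : Rm k m -> Prop := gen_ideal (fun g =>
  g = x 0 \/ g = x 1 \/ g = y 0 \/ g = z 0 \/ g = z 1 \/ fgens g).
Definition J3 : Rm k m -> Prop := gen_ideal (fun g =>
  g = x 0 \/ g = x 1 \/ g = y 0 \/ g = z 0 \/ g = y 1 + z 1 \/ fgens g).

Definition I1 := contr_loc J1 (z 1).
Definition I2 := contr_loc J2 (y 1).
Definition I3 := contr_loc J3 (y 1).

Definition Z0 := zero_set I0.
Definition Z1 := zero_set I1.
Definition Z2 := zero_set I2.
Definition Z3 := zero_set I3.
End TheIdeals.

(* Main.v *)
Require Import Defs.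
From HB Require Import structures.
From mathcomp Require Import all_boot all_order all_algebra.
From mathcomp Require Import mpoly.
From mathcomp Require Import zify ring.
From Stdlib Require Import FunctionalExtensionality PropExtensionality.
Set Implicit Arguments. Unset Strict Implicit. Unset Printing Implicit Defensive.
Local Open Scope ring_scope.
Import GRing.Theory.

Section Gen.
Variable R : comNzRingType.
Implicit Types S : R -> Prop.

Lemma gi0 S : gen_ideal S 0.
Proof. by exists 0%N, (fun i => 0), (fun i => 0); split => [[]|]; rewrite ?big_ord0. Qed.

Lemma gi_sub S g : S g -> gen_ideal S g.
Proof. by move=> h; exists 1%N, (fun=> g), (fun=> 1); split => //; rewrite big_ord1 mul1r. Qed.

Lemma giM S r g : gen_ideal S g -> gen_ideal S (r * g).
Proof.
move=> [n [a [c [Ha ->]]]]; exists n, a, (fun i => r * c i); split => //.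
by rewrite mulr_sumr; apply: eq_bigr => i _; rewrite mulrA.
Qed.

Lemma giD S g h : gen_ideal S g -> gen_ideal S h -> gen_ideal S (g + h).
Proof.
move=> [n1 [a1 [c1 [Ha1 ->]]]] [n2 [a2 [c2 [Ha2 ->]]]].
exists (n1 + n2)%N, (fun i => match split i with inl j => a1 j | inr j => a2 j end),
  (fun i => match split i with inl j => c1 j | inr j => c2 j end); split.
  by move=> i; case: (split i).
rewrite big_split_ord /=; congr (_ + _); apply: eq_bigr => i _.
  by rewrite (unsplitK (inl i)).
by rewrite (unsplitK (inr i)).
Qed.

Lemma giN S g : gen_ideal S g -> gen_ideal S (- g).
Proof. by move=> h; rewrite -mulN1r; apply: giM. Qed.

Lemma gi_map (f : {rmorphism R -> R}) S S' :
  (forall a, S a -> gen_ideal S' (f a)) ->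
  forall g, gen_ideal S g -> gen_ideal S' (f g).
Proof.
move=> H g [n [a [c [Ha ->]]]]; rewrite rmorph_sum.
apply: (big_ind (gen_ideal S')); [exact: gi0 | exact: giD | ].
by move=> i _; rewrite rmorphM; apply: giM; apply: H.
Qed.

Lemma prime_pull (f : {rmorphism R -> R}) P :
  prime_ideal P -> prime_ideal (fun g => P (f g)).
Proof.
case=> h0 hD hM h1 hP; split.
- by rewrite rmorph0.
- by move=> a b ha hb; rewrite rmorphD; apply: hD.
- by move=> r a ha; rewrite rmorphM; apply: hM.
- by rewrite rmorph1.
- by move=> a b; rewrite rmorphM; apply: hP.
Qed.

Lemma spec_zero (f : {rmorphism R -> R}) (fK : involutive f) (I I' : R -> Prop) :
  (forall g, I g -> I' (f g)) -> (forall g, I' g -> I (f g)) ->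
  spec_image f (zero_set I) = zero_set I'.
Proof.
move=> H1 H2; apply: functional_extensionality => Q.
apply: propositional_extensionality; split.
- move=> [P [Pp PI] ->]; split; first exact: prime_pull.
  by move=> g /H2 /PI.
- move=> [Qp QI]; exists (fun g => Q (f g)).
    split; first exact: prime_pull.
    by move=> g /H1 /QI.
  by apply: functional_extensionality => g; rewrite fK.
Qed.

Lemma contr_map (f : {rmorphism R -> R}) S S' h h' :
  (forall a, gen_ideal S a -> gen_ideal S' (f a)) -> gen_ideal S' (f h - h') ->
  forall g, contr_loc (gen_ideal S) h g -> contr_loc (gen_ideal S') h' (f g).
Proof.
move=> H Hh g [n Hn]; exists n.
have := H _ Hn; rewrite rmorphM rmorphXn => H3.
have -> : h' ^+ n * f g = (f h) ^+ n * f g - ((f h) ^+ n - h' ^+ n) * f g by ring.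
apply: giD => //; apply: giN; rewrite mulrC subrXX mulrA mulrC; apply: giM.
exact: giM.
Qed.

End Gen.

Lemma comp_comp (k : comNzRingType) n (lq lq' : n.-tuple {mpoly k[n]}) p :
  comp_mpoly lq' (comp_mpoly lq p) = comp_mpoly [tuple comp_mpoly lq' (tnth lq i) | i < n] p.
Proof.
rewrite [comp_mpoly lq p]comp_mpolyEX [RHS]comp_mpolyEX raddf_sum /=.
apply: eq_bigr => mm _; rewrite comp_mpolyZ !comp_mpolyX rmorph_prod; congr (_ *: _).
by apply: eq_bigr => i _; rewrite rmorphXn tnth_mktuple.
Qed.

Lemma var_cases m (a : nat) : (a < (3 * m).+3)%N ->
  (a %/ m.+1 = 0 /\ a = a %% m.+1)%N \/ (a %/ m.+1 = 1 /\ a = m.+1 + a %% m.+1)%N \/ (a %/ m.+1 = 2 /\ a = 2 * m.+1 + a %% m.+1)%N.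
Proof. move=> h. have := divn_eq a m.+1. have := ltn_pmod a (ltn0Sn m).
have : (a %/ m.+1 < 3)%N. by rewrite ltn_divLR //; lia.
case: (a %/ m.+1)%N => [|[|[|q]]] //; lia.
Qed.

Section Conc.
Variables (k : comNzRingType) (m : nat).
Local Notation x := (@xv k m). Local Notation y := (@yv k m).
Local Notation z := (@zv k m).

HB.instance Definition _ := GRing.RMorphism.copy (@phi1 k m) (comp_mpoly (mktuple (@phi1_var k m))).
HB.instance Definition _ := GRing.RMorphism.copy (@phi2 k m) (comp_mpoly (mktuple (@phi2_var k m))).

Lemma divmod_x i : (i <= m)%N -> (i %/ m.+1 = 0 /\ i %% m.+1 = i)%N.
Proof. by move=> h; rewrite divn_small ?modn_small. Qed.
Lemma divmod_y i : (i <= m)%N -> ((m.+1 + i) %/ m.+1 = 1 /\ (m.+1 + i) %% m.+1 = i)%N.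
Proof. move=> h; rewrite -{1 3}(mul1n m.+1) divnMDl // modnMDl divn_small ?modn_small //. Qed.
Lemma divmod_z i : (i <= m)%N -> ((2 * m.+1 + i) %/ m.+1 = 2 /\ (2 * m.+1 + i) %% m.+1 = i)%N.
Proof. move=> h; rewrite divnMDl // modnMDl divn_small ?modn_small //. Qed.

Lemma phi1_varE (a : 'I_((3 * m).+3)) : @phi1 k m 'X_a = phi1_var k a.
Proof. by rewrite /phi1 comp_mpolyXU -tnth_nth tnth_mktuple. Qed.
Lemma phi2_varE (a : 'I_((3 * m).+3)) : @phi2 k m 'X_a = phi2_var k a.
Proof. by rewrite /phi2 comp_mpolyXU -tnth_nth tnth_mktuple. Qed.

Lemma phi1x i : (i <= m)%N -> phi1 (x i) = x i.
Proof. move=> h; rewrite /xv phi1_varE /phi1_var inordK; last lia.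
by have [-> ->] := divmod_x h. Qed.
Lemma phi1y i : (i <= m)%N -> phi1 (y i) = z i.
Proof. move=> h; rewrite /yv phi1_varE /phi1_var inordK; last lia.
by have [-> ->] := divmod_y h. Qed.
Lemma phi1z i : (i <= m)%N -> phi1 (z i) = y i.
Proof. move=> h; rewrite /zv phi1_varE /phi1_var inordK; last lia.
by have [-> ->] := divmod_z h. Qed.
Lemma phi2x i : (i <= m)%N -> phi2 (x i) = x i.
Proof. move=> h; rewrite /xv phi2_varE /phi2_var inordK; last lia.
by have [-> ->] := divmod_x h. Qed.
Lemma phi2y i : (i <= m)%N -> phi2 (y i) = y i.
Proof. move=> h; rewrite /yv phi2_varE /phi2_var inordK; last lia.
by have [-> ->] := divmod_y h. Qed.
Lemma phi2z i : (i <= m)%N -> phi2 (z i) = y i + z i.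
Proof. move=> h; rewrite /zv phi2_varE /phi2_var inordK; last lia.
by have [-> ->] := divmod_z h. Qed.

Lemma var_back (a : 'I_((3 * m).+3)) :
  let i := (a %% m.+1)%N in
  ((a %/ m.+1 = 0)%N /\ 'X_a = x i) \/ ((a %/ m.+1 = 1)%N /\ 'X_a = y i) \/
  ((a %/ m.+1 = 2)%N /\ 'X_a = z i).
Proof.
move=> i; have hi : (i < m.+1)%N by apply: ltn_pmod.
have [[h1 h2]|[[h1 h2]|[h1 h2]]] := var_cases (ltn_ord a); [left|right;left|right;right];
  split => //; rewrite /xv /yv /zv; apply: (congr1 (fun b => 'X_b)); apply: val_inj; rewrite /= inordK //; lia.
Qed.

Lemma phi1K : involutive (@phi1 k m).
Proof.
move=> p; rewrite {1}/phi1 /phi1 comp_comp -[RHS]comp_mpoly_id; congr comp_mpoly.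
apply: eq_from_tnth => a; rewrite !tnth_mktuple.
have hi : ((a %% m.+1) <= m)%N by rewrite -ltnS ltn_pmod.
rewrite /phi1_var; have [[-> ->]|[[-> ->]|[-> ->]]] := var_back a => /=.
- exact: phi1x.
- exact: phi1z.
- exact: phi1y.
Qed.


Hypothesis h2 : (2%:R : k) = 0.
Hypothesis hm : (2 <= m)%N.
Let l0 : (0 <= m)%N := leq0n m.
Let l1 : (1 <= m)%N := ltnW hm.
Let l2 : (2 <= m)%N := hm.

Lemma mp2 (p : Rm k m) : p *+ 2 = 0.
Proof. by rewrite -mulr_natr -(rmorph_nat (mpolyC (3 * m).+3 (R:=k))) h2 raddf0 mulr0. Qed.

Lemma pp2 (p : {poly Rm k m}) : p *+ 2 = 0.
Proof. by rewrite -mulr_natr -polyC_natr -[2%:R]mulr1n mp2 polyC0 mulr0. Qed.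

Lemma phi2yz i : (i <= m)%N -> phi2 (y i + z i) = z i.
Proof. move=> hi; by rewrite rmorphD /= phi2y // phi2z // addrA -mulr2n mp2 add0r. Qed.

Lemma phi2K : involutive (@phi2 k m).
Proof.
move=> p; rewrite {1}/phi2 /phi2 comp_comp -[RHS]comp_mpoly_id; congr comp_mpoly.
apply: eq_from_tnth => a; rewrite !tnth_mktuple.
have hi : ((a %% m.+1) <= m)%N by rewrite -ltnS ltn_pmod.
rewrite /phi2_var; have [[-> ->]|[[-> ->]|[-> ->]]] := var_back a => /=.
- exact: phi2x.
- exact: phi2y.
- exact: phi2yz.
Qed.

Lemma mapX1 : map_poly (@phi1 k m) (Xt k m) = Xt k m.
Proof. rewrite /Xt rmorph_sum; apply: eq_bigr => i _.
by rewrite /= map_polyZ map_polyXn /= phi1x // -ltnS ltn_ord. Qed.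
Lemma mapY1 : map_poly (@phi1 k m) (Yt k m) = Zt k m.
Proof. rewrite /Yt rmorph_sum; apply: eq_bigr => i _.
by rewrite /= map_polyZ map_polyXn /= phi1y // -ltnS ltn_ord. Qed.
Lemma mapZ1 : map_poly (@phi1 k m) (Zt k m) = Yt k m.
Proof. rewrite /Zt rmorph_sum; apply: eq_bigr => i _.
by rewrite /= map_polyZ map_polyXn /= phi1z // -ltnS ltn_ord. Qed.
Lemma mapX2 : map_poly (@phi2 k m) (Xt k m) = Xt k m.
Proof. rewrite /Xt rmorph_sum; apply: eq_bigr => i _.
by rewrite /= map_polyZ map_polyXn /= phi2x // -ltnS ltn_ord. Qed.
Lemma mapY2 : map_poly (@phi2 k m) (Yt k m) = Yt k m.
Proof. rewrite /Yt rmorph_sum; apply: eq_bigr => i _.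
by rewrite /= map_polyZ map_polyXn /= phi2y // -ltnS ltn_ord. Qed.
Lemma mapZ2 : map_poly (@phi2 k m) (Zt k m) = Yt k m + Zt k m.
Proof. rewrite /Zt /Yt rmorph_sum -big_split; apply: eq_bigr => i _.
by rewrite /= map_polyZ map_polyXn /= phi2z ?scalerDl // -ltnS ltn_ord. Qed.

Lemma phi1f j : phi1 (fj k m j) = fj k m j.
Proof.
rewrite /fj -coef_map; congr (_`_j).
rewrite /fT; do ![rewrite rmorphD /= | rewrite rmorphM /= | rewrite rmorphXn /=]; rewrite mapX1 mapY1 mapZ1; f_equal; ring.
Qed.
Lemma phi2f j : phi2 (fj k m j) = fj k m j.
Proof.
rewrite /fj -coef_map; congr (_`_j).
rewrite /fT; do ![rewrite rmorphD /= | rewrite rmorphM /= | rewrite rmorphXn /=]; rewrite mapX2 mapY2 mapZ2; f_equal.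
set X := Xt k m; set Y := Yt k m; set Z := Zt k m.
transitivity (X ^+ 2 + Y ^+ 2 * Z + Y * Z ^+ 2 + (Y ^+ 3 + Y ^+ 2 * Z) *+ 2); first ring.
by rewrite pp2 addr0.
Qed.


Ltac gen := apply: gi_sub; repeat (first [left; reflexivity | right]); done.
Ltac brk := let H := fresh in move=> ? H; repeat match goal with H : _ \/ _ |- _ => destruct H as [->|H] end.
Ltac fcase := try match goal with H : @fgens _ _ _ |- _ => destruct H as [j hj ->] end.
Ltac solve1 := rewrite /= ?rmorphD /= ?phi1z ?phi1y ?phi1x ?phi2z ?phi2y ?phi2x ?phi1f ?phi2f //;
  first [ gen | apply: giD; gen | rewrite addrC; gen | rewrite addrA -mulr2n mp2 add0r; gen
        | apply: gi_sub; repeat right; eexists; last reflexivity; assumption ].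
Ltac gm := apply: gi_map; brk; fcase; solve1.

Lemma I00_1 (g : Rm k m) : I0 g -> I0 (phi1 g). Proof. apply: gi_map; brk; fcase. all: rewrite /= ?rmorphD /= ?phi1z ?phi1y ?phi1x ?phi2z ?phi2y ?phi2x ?phi1f ?phi2f //.
 gen. gen. gen. gen. gen. gen. gen. apply: gi_sub; repeat right. by exists j. Qed.
Lemma I00_2 (g : Rm k m) : I0 g -> I0 (phi2 g). Proof. gm. Qed.
Lemma J12_1 (g : Rm k m) : J1 g -> J2 (phi1 g). Proof. gm. Qed.
Lemma J21_1 (g : Rm k m) : J2 g -> J1 (phi1 g). Proof. gm. Qed.
Lemma J33_1 (g : Rm k m) : J3 g -> J3 (phi1 g). Proof. gm. Qed.
Lemma J11_2 (g : Rm k m) : J1 g -> J1 (phi2 g). Proof. gm. Qed.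
Lemma J23_2 (g : Rm k m) : J2 g -> J3 (phi2 g). Proof. gm. Qed.
Lemma J32_2 (g : Rm k m) : J3 g -> J2 (phi2 g). Proof. gm. Qed.

Lemma I12_1 (g : Rm k m) : I1 g -> I2 (phi1 g).
Proof. apply: contr_map; first exact: J12_1. by rewrite /= phi1z // subrr; exact: gi0. Qed.
Lemma I21_1 (g : Rm k m) : I2 g -> I1 (phi1 g).
Proof. apply: contr_map; first exact: J21_1. by rewrite /= phi1y // subrr; exact: gi0. Qed.
Lemma I33_1 (g : Rm k m) : I3 g -> I3 (phi1 g).
Proof. apply: contr_map; first exact: J33_1. rewrite /= phi1y //.
have -> : z 1 - y 1 = y 1 + z 1 - y 1 *+ 2 by rewrite mulr2n; ring.
rewrite mp2 subr0; gen. Qed.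
Lemma I11_2 (g : Rm k m) : I1 g -> I1 (phi2 g).
Proof. apply: contr_map; first exact: J11_2. rewrite /= phi2z // addrK; gen. Qed.
Lemma I23_2 (g : Rm k m) : I2 g -> I3 (phi2 g).
Proof. apply: contr_map; first exact: J23_2. by rewrite /= phi2y // subrr; exact: gi0. Qed.
Lemma I32_2 (g : Rm k m) : I3 g -> I2 (phi2 g).
Proof. apply: contr_map; first exact: J32_2. by rewrite /= phi2y // subrr; exact: gi0. Qed.

Lemma main_conc :
  let psi1 := spec_image (@phi1 k m) in
  let psi2 := spec_image (@phi2 k m) in
  (psi1 (@Z0 k m) = @Z0 k m /\ psi1 (@Z1 k m) = @Z2 k m /\
   psi1 (@Z2 k m) = @Z1 k m /\ psi1 (@Z3 k m) = @Z3 k m) /\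
  (psi2 (@Z0 k m) = @Z0 k m /\ psi2 (@Z1 k m) = @Z1 k m /\
   psi2 (@Z2 k m) = @Z3 k m /\ psi2 (@Z3 k m) = @Z2 k m).
Proof.
have K1 := phi1K; have K2 := phi2K.
split; (split; [|split; [|split]]).
- by apply: spec_zero => // g; apply: I00_1.
- apply: spec_zero => //; [exact: I12_1 | exact: I21_1].
- apply: spec_zero => //; [exact: I21_1 | exact: I12_1].
- apply: spec_zero => //; [exact: I33_1 | exact: I33_1].
- apply: spec_zero => //; [exact: I00_2 | exact: I00_2].
- apply: spec_zero => //; [exact: I11_2 | exact: I11_2].
- apply: spec_zero => //; [exact: I23_2 | exact: I32_2].
- apply: spec_zero => //; [exact: I32_2 | exact: I23_2].
Qed.

End Conc.

Unset Implicit Arguments. Set Strict Implicit.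
Theorem lemma3p5 (k : closedFieldType) (hchar : 2%N \in [pchar k])
  (m : nat) (hm : (5 <= m)%N) :
  let psi1 := spec_image (@phi1 k m) in
  let psi2 := spec_image (@phi2 k m) in
  (psi1 (@Z0 k m) = @Z0 k m /\ psi1 (@Z1 k m) = @Z2 k m /\
   psi1 (@Z2 k m) = @Z1 k m /\ psi1 (@Z3 k m) = @Z3 k m) /\
  (psi2 (@Z0 k m) = @Z0 k m /\ psi2 (@Z1 k m) = @Z1 k m /\
   psi2 (@Z2 k m) = @Z3 k m /\ psi2 (@Z3 k m) = @Z2 k m).
Proof.
apply: main_conc; first exact: pcharf0 hchar.
exact: leq_trans hm.
Qed.
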